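(* For $1\le i\le n$ let $f_i:\mathbb{R}\to\mathbb{R}$ be a convex function that is bounded below, let $a_1,\dots,a_n\ge 0$, and define $g:\mathbb{Z}^n\to\mathbb{R}$ by $g(\vec y)=\sum_{i=1}^n a_if_i(y_i)$. Then $(\mathbb{Z}^n,g)$ is an Ameso($0$) pair.
   Context: Floors and ceilings of vectors are taken componentwise. A set $D^n\subseteq\mathbb{Z}^n$ is an Ameso set if $\lceil(\vec x+\vec y)/2\rceil,\lfloor(\vec x+\vec y)/2\rfloor\in D^n$ for all $\vec x,\vec y\in D^n$. For $C\ge 0$, $(D^n,f)$ is an Ameso($C$) pair if $D^n$ is an Ameso set, $f:D^n\to\mathbb{R}$ is bounded below, and $f(\vec x)+f(\vec y)+C\ge f(\lceil(\vec x+\vec y)/2\rceil)+f(\lfloor(\vec x+\vec y)/2\rfloor)$ for all $\vec x,\vec y\in D^n$. *)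

(* Defs.v *)
From mathcomp Require Import all_boot all_order all_algebra.
From mathcomp Require Import reals.
Set Implicit Arguments. Unset Strict Implicit. Unset Printing Implicit Defensive.
Import Order.TTheory GRing.Theory Num.Theory.
Local Open Scope ring_scope.

Definition zvec (n : nat) := {ffun 'I_n -> int}.

(* floor and ceiling of (x+y)/2 for integers, using Euclidean division by 2
   (the remainder is nonnegative, so (m %/ 2)%Z is the floor of m/2). *)
Definition floor_half (m : int) : int := (m %/ 2)%Z.
Definition ceil_half (m : int) : int := - ((- m) %/ 2)%Z.

Definition mid_floor n (x y : zvec n) : zvec n := [ffun i => floor_half (x i + y i)].
Definition mid_ceil n (x y : zvec n) : zvec n := [ffun i => ceil_half (x i + y i)].

Definition ameso_set n (D : zvec n -> Prop) : Prop :=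
  forall x y, D x -> D y -> D (mid_ceil x y) /\ D (mid_floor x y).

Definition ameso_pair (R : realType) n (D : zvec n -> Prop) (f : zvec n -> R)
  (C : R) : Prop :=
  ameso_set D /\
  (exists m : R, forall x, D x -> m <= f x) /\
  (forall x y, D x -> D y ->
     f (mid_ceil x y) + f (mid_floor x y) <= f x + f y + C).

Definition convex_fun (R : realType) (f : R -> R) : Prop :=
  forall (x y t : R), 0 <= t -> t <= 1 ->
    f (t * x + (1 - t) * y) <= t * f x + (1 - t) * f y.

Definition bounded_below (R : realType) (f : R -> R) : Prop :=
  exists m : R, forall x, m <= f x.

(* Main.v *)
Require Import Defs.
From mathcomp Require Import all_boot all_order all_algebra.
From mathcomp Require Import reals zify ring lra.
From Stdlib Require Import IndefiniteDescription.
Import Order.TTheory GRing.Theory Num.Theory.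
Local Open Scope ring_scope.

Lemma half_facts (x y : int) : x <= y ->
  [/\ ceil_half (x + y) + floor_half (x + y) = x + y,
      x <= ceil_half (x+y) & ceil_half (x+y) <= y].
Proof.
move=> hxy; rewrite /ceil_half /floor_half.
have e1 := divz_eq (x+y) 2; have e2 := divz_eq (-(x+y)) 2.
have h1 : 0 <= ((x+y) %% 2)%Z by apply: modz_ge0.
have h2 : ((x+y) %% 2)%Z < 2 by apply: ltz_pmod.
have h3 : 0 <= ((-(x+y)) %% 2)%Z by apply: modz_ge0.
have h4 : ((-(x+y)) %% 2)%Z < 2 by apply: ltz_pmod.
move: e1 e2 h1 h2 h3 h4.
set q1 := ((x + y) %/ 2)%Z; set q2 := ((-(x+y)) %/ 2)%Z.
set r1 := ((x + y) %% 2)%Z; set r2 := ((-(x+y)) %% 2)%Z.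
move=> e1 e2 h1 h2 h3 h4; split; lia.
Qed.
Lemma conv_pair (R : realType) (g : R -> R) (x y c : R) : convex_fun g ->
  x <= c -> c <= y -> g c + g (x + y - c) <= g x + g y.
Proof.
move=> hg hxc hcy.
have [exy|nxy] := eqVneq x y.
  have ec : c = x by rewrite exy in hxc; lra.
  by rewrite ec exy addrK.
have yx : 0 < y - x by rewrite subr_gt0 lt_neqAle nxy (le_trans hxc hcy).
set t := (y - c) / (y - x).
have t0 : 0 <= t by apply: divr_ge0; lra.
have t1 : t <= 1 by rewrite ler_pdivrMr // mul1r; lra.
have ec : c = t * x + (1 - t) * y.
  rewrite /t; field; lra.
have ed : x + y - c = (1 - t) * x + (1 - (1 - t)) * y.
  rewrite /t; field; lra.
have H1 := hg x y t t0 t1.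
have H2 := hg x y (1 - t) ltac:(lra) ltac:(lra).
rewrite {1}ec ed; lra.
Qed.

Lemma coord (R : realType) (g : R -> R) (x y : int) : convex_fun g ->
  g (ceil_half (x + y))%:~R + g (floor_half (x + y))%:~R <= g x%:~R + g y%:~R.
Proof.
move=> hg.
wlog hxy : x y / x <= y.
  move=> H; case: (lerP x y) => h; first exact: H.
  rewrite [x + y]addrC [g x%:~R + _]addrC; apply: H; exact: ltW.
have [e hxc hcy] := half_facts _ _ hxy.
have ef : floor_half (x + y) = x + y - ceil_half (x + y) by rewrite -{2}e addrAC subrr add0r.
rewrite ef intrB intrD.
apply: conv_pair => //; by rewrite ler_int.
Qed.

Theorem mainTheorem8 (R : realType) (n : nat) (f : 'I_n -> R -> R) (a : 'I_n -> R)
  (hconv : forall i, convex_fun (f i))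
  (hbdd : forall i, bounded_below (f i))
  (ha : forall i, 0 <= a i) :
  ameso_pair (fun _ : zvec n => True)
    (fun y : zvec n => \sum_(i < n) a i * f i ((y i)%:~R)) 0.
Proof.
split; first by [].
split.
  pose m i := proj1_sig (@constructive_indefinite_description _ _ (hbdd i)).
  exists (\sum_(i < n) a i * m i) => x _.
  apply: ler_sum => i _; apply: ler_wpM2l => //; exact: (proj2_sig (@constructive_indefinite_description _ _ (hbdd i))).
move=> x y _ _; rewrite addr0 -!big_split /=.
apply: ler_sum => i _; rewrite !ffunE -!mulrDr; apply: ler_wpM2l => //.
exact: coord.
Qed.
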